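(* A hypersemigroup $(H,\circ)$ is both regular and intra-regular if and only if for every right ideal $X$, every left ideal $Y$ and every bi-ideal $B$ of $H$ we have $X\cap B\cap Y\subseteq B*X*Y$.
   Context: Let $H$ be a nonempty set and $\mathcal{P}^*(H)$ the set of all nonempty subsets of $H$. A hyperoperation on $H$ is a map $\circ: H\times H\to \mathcal{P}^*(H)$; the pair $(H,\circ)$ is a hypergroupoid. For $A,B\in\mathcal{P}^*(H)$ define $A*B:=\bigcup_{(a,b)\in A\times B}(a\circ b)$. A hypergroupoid is a hypersemigroup if $\{x\}*(y\circ z)=(x\circ y)*\{z\}$ for all $x,y,z\in H$; then $*$ is associative on $\mathcal{P}^*(H)$. A hypersemigroup is regular if for every $a\in H$ there exists $x\in H$ with $a\in(a\circ x)*\{a\}$, and intra-regular if for every $a\in H$ there exist $x,y\in H$ with $a\in\{x\}*\{a\}*\{a\}*\{y\}$. A nonempty subset $A$ of $H$ is a left ideal if $H*A\subseteq A$ and a right ideal if $A*H\subseteq A$. A nonempty subset $B$ of $H$ is a bi-ideal if $B*H*B\subseteq B$. *)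

(* Defs.v *)
Definition hset (H : Type) := H -> Prop.

Definition subset {H : Type} (A B : hset H) : Prop := forall x, A x -> B x.
Definition nonempty {H : Type} (A : hset H) : Prop := exists x, A x.
Definition single {H : Type} (a : H) : hset H := fun x => x = a.
Definition fullset (H : Type) : hset H := fun _ => True.
Definition inter {H : Type} (A B : hset H) : hset H := fun x => A x /\ B x.

Definition hyperoperation {H : Type} (op : H -> H -> hset H) : Prop :=
  forall x y, nonempty (op x y).

Definition setmul {H : Type} (op : H -> H -> hset H) (A B : hset H) : hset H :=
  fun z => exists a b, A a /\ B b /\ op a b z.

Definition hypersemigroup {H : Type} (op : H -> H -> hset H) : Prop :=
  hyperoperation op /\
  forall x y z w,
    setmul op (single x) (op y z) w <-> setmul op (op x y) (single z) w.

Definition regular {H : Type} (op : H -> H -> hset H) : Prop :=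
  forall a, exists x, setmul op (op a x) (single a) a.

(* a in {x}*{a}*{a}*{y}; * is associative on hypersemigroups, we bracket left *)
Definition intra_regular {H : Type} (op : H -> H -> hset H) : Prop :=
  forall a, exists x y,
    setmul op (setmul op (setmul op (single x) (single a)) (single a)) (single y) a.

Definition left_ideal {H : Type} (op : H -> H -> hset H) (A : hset H) : Prop :=
  nonempty A /\ subset (setmul op (fullset H) A) A.

Definition right_ideal {H : Type} (op : H -> H -> hset H) (A : hset H) : Prop :=
  nonempty A /\ subset (setmul op A (fullset H)) A.

Definition bi_ideal {H : Type} (op : H -> H -> hset H) (B : hset H) : Prop :=
  nonempty B /\ subset (setmul op (setmul op B (fullset H)) B) B.

(* Main.v *)
Require Import Defs.
From Stdlib Require Import FunctionalExtensionality PropExtensionality.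

Definition U {H : Type} (A B : hset H) : hset H := fun x => A x \/ B x.

Lemma setext {H : Type} (A B : hset H) : (forall z, A z <-> B z) -> A = B.
Proof. intros h; apply functional_extensionality; intro z; apply propositional_extensionality; auto. Qed.

Lemma massoc {H : Type} (op : H -> H -> hset H) (hs : hypersemigroup op) A B C :
  setmul op (setmul op A B) C = setmul op A (setmul op B C).
Proof.
  destruct hs as [_ hs]. apply setext; intro w; split.
  - intros (u & c & (a & b & Ha & Hb & Hu) & Hc & Hw).
    assert (h1 : setmul op (op a b) (single c) w) by (exists u, c; repeat split; auto).
    apply hs in h1. destruct h1 as (a' & v & Ha' & Hv & Hw').
    unfold single in Ha'; subst a'.
    exists a, v; repeat split; auto. exists b, c; auto.
  - intros (a & v & Ha & (b & c & Hb & Hc & Hv) & Hw).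
    assert (h1 : setmul op (single a) (op b c) w) by (exists a, v; repeat split; auto).
    apply hs in h1. destruct h1 as (u & c' & Hu & Hc' & Hw').
    unfold single in Hc'; subst c'.
    exists u, c; repeat split; auto. exists a, b; auto.
Qed.

Lemma mono {H : Type} (op : H -> H -> hset H) A A' B B' :
  subset A A' -> subset B B' -> subset (setmul op A B) (setmul op A' B').
Proof. intros h1 h2 z (a & b & Ha & Hb & Hz). exists a, b; auto. Qed.

Lemma distl {H : Type} (op : H -> H -> hset H) A B C :
  setmul op (U A B) C = U (setmul op A C) (setmul op B C).
Proof.
  apply setext; intro w; split.
  - intros (a & c & [Ha|Ha] & Hc & Hw); [left|right]; exists a, c; auto.
  - intros [(a & c & Ha & Hc & Hw)|(a & c & Ha & Hc & Hw)]; exists a, c;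
      unfold U; auto.
Qed.

Lemma distr {H : Type} (op : H -> H -> hset H) A B C :
  setmul op C (U A B) = U (setmul op C A) (setmul op C B).
Proof.
  apply setext; intro w; split.
  - intros (c & a & Hc & [Ha|Ha] & Hw); [left|right]; exists c, a; auto.
  - intros [(c & a & Hc & Ha & Hw)|(c & a & Hc & Ha & Hw)]; exists c, a;
      unfold U; auto.
Qed.

Lemma sub_U {H : Type} (A B C : hset H) : subset A C -> subset B C -> subset (U A B) C.
Proof. intros h1 h2 z [h|h]; auto. Qed.
Lemma sub_Ul {H : Type} (A B C : hset H) : subset C A -> subset C (U A B).
Proof. intros h z hz; left; auto. Qed.
Lemma sub_Ur {H : Type} (A B C : hset H) : subset C B -> subset C (U A B).
Proof. intros h z hz; right; auto. Qed.
Lemma sub_refl {H : Type} (A : hset H) : subset A A.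
Proof. intros z h; exact h. Qed.
Lemma sub_trans {H : Type} (A B C : hset H) : subset A B -> subset B C -> subset A C.
Proof. intros h1 h2 z h; auto. Qed.
Lemma sub_F {H : Type} (A : hset H) : subset A (fullset H).
Proof. intros z _; exact I. Qed.

Lemma absF {H : Type} (op : H -> H -> hset H) (hs : hypersemigroup op) X :
  subset (setmul op (fullset H) (setmul op (fullset H) X)) (setmul op (fullset H) X).
Proof. rewrite <- massoc by exact hs. apply mono; [apply sub_F|apply sub_refl]. Qed.

Lemma absF2 {H : Type} (op : H -> H -> hset H) (hs : hypersemigroup op) A X :
  subset (setmul op A (setmul op (fullset H) X)) (setmul op (fullset H) X).
Proof. rewrite <- massoc by exact hs. apply mono; [apply sub_F|apply sub_refl]. Qed.

Lemma opS {H : Type} (op : H -> H -> hset H) a b :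
  op a b = setmul op (single a) (single b).
Proof.
  apply setext; intro w; split.
  - intro h; exists a, b; unfold single; auto.
  - intros (a' & b' & ha & hb & h); unfold single in *; subst; auto.
Qed.

Lemma in_sub {H : Type} (A : hset H) a : A a -> subset (single a) A.
Proof. intros h z hz; unfold single in hz; subst; auto. Qed.

Theorem proposition25 (H : Type) (hH : inhabited H) (op : H -> H -> hset H)
  (hsg : hypersemigroup op) :
  (regular op /\ intra_regular op) <->
  (forall X Y B : hset H,
     right_ideal op X -> left_ideal op Y -> bi_ideal op B ->
     subset (inter (inter X B) Y) (setmul op (setmul op B X) Y)).
Proof.
  split.
  - intros [hr hi] X Y B [_ hX] [_ hY] [_ hB] a [[aX aB] aY].
    set (S := single a).
    destruct (hr a) as [x hx]. destruct (hi a) as (y & z & hz).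
    rewrite opS in hx. fold S in hx, hz.
    assert (h1 : subset S (setmul op (setmul op S (single x)) S)) by (apply in_sub; exact hx).
    assert (h2 : subset S (setmul op (setmul op (setmul op (single y) S) S) (single z)))
      by (apply in_sub; exact hz).
    set (P := setmul op S (single x)) in *.
    set (T := setmul op (single x) S).
    assert (h3 : subset S (setmul op S T)).
    { unfold T; rewrite <- massoc by exact hsg; exact h1. }
    set (I0 := setmul op (setmul op (setmul op (single y) S) S) (single z)) in *.
    assert (h4 : subset S (setmul op P (setmul op I0 T))).
    { eapply sub_trans; [exact h1|]. apply mono; [apply sub_refl|].
      eapply sub_trans; [exact h3|]. apply mono; [exact h2|apply sub_refl]. }
    set (Bp := setmul op (setmul op P (single y)) S).
    set (Xp := setmul op S (single z)).
    assert (e : setmul op P (setmul op I0 T) = setmul op (setmul op Bp Xp) T).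
    { unfold Bp, Xp, P, I0, T. repeat rewrite (massoc op hsg). reflexivity. }
    assert (hS : S a) by reflexivity.
    apply h4 in hS. rewrite e in hS. revert hS. apply mono; [apply mono|].
    + eapply sub_trans; [|exact hB]. unfold Bp, P. apply mono; [|apply in_sub; exact aB].
      rewrite (massoc op hsg). apply mono; [apply in_sub; exact aB|apply sub_F].
    + eapply sub_trans; [|exact hX]. apply mono; [apply in_sub; exact aX|apply sub_F].
    + eapply sub_trans; [|exact hY]. apply mono; [apply sub_F|apply in_sub; exact aY].
  - intros hP. split.
    + intro a. set (S := single a).
      assert (key : forall T, subset T (setmul op S (setmul op (fullset H) S)) ->
                T a -> exists x, setmul op (op a x) (single a) a).
      { intros T hT ha. apply hT in ha.
        destruct ha as (a0 & c & ha0 & (x & a1 & _ & ha1 & hc) & hw).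
        unfold S, single in *; subst a0 a1.
        exists x. rewrite opS, (massoc op hsg). exists a, c; repeat split; auto.
        exists x, a; repeat split; auto. }
      apply (key (setmul op (setmul op (U S (setmul op S (setmul op (fullset H) S))) (fullset H))
                        (U S (setmul op (fullset H) S)))).
      * repeat (rewrite (distl op) || rewrite (distr op)). repeat apply sub_U;
        repeat rewrite (massoc op hsg); (apply mono; [apply sub_refl|]);
        repeat rewrite <- (massoc op hsg); (apply mono; [apply sub_F|apply sub_refl]).
      * apply hP.
        -- split; [destruct hH as [h0]; exists h0; exact I|apply sub_F].
        -- split; [exists a; left; reflexivity|].
           apply sub_Ur. rewrite (distr op). apply sub_U; [apply sub_refl|apply absF; exact hsg].
        -- split; [exists a; left; reflexivity|].
           apply sub_Ur. repeat (rewrite (distl op) || rewrite (distr op)). repeat apply sub_U;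
           repeat rewrite (massoc op hsg); (apply mono; [apply sub_refl|]);
           repeat rewrite <- (massoc op hsg); (apply mono; [apply sub_F|apply sub_refl]).
        -- split; [split; [exact I|left; reflexivity]|left; reflexivity].
    + intro a. set (S := single a).
      set (W := setmul op S (setmul op S (fullset H))).
      set (V := setmul op (fullset H) W).
      assert (key : V a -> exists x y,
        setmul op (setmul op (setmul op (single x) (single a)) (single a)) (single y) a).
      { intros (x & v & _ & (a1 & w & ha1 & (a2 & y & ha2 & _ & hw) & hv) & ha).
        unfold S, single in *; subst a1 a2.
        exists x, y. rewrite !(massoc op hsg). exists x, v; repeat split; auto.
        exists a, w; repeat split; auto. exists a, y; repeat split; auto. }
      assert (hUWV : U W V a).
      { set (L := U S (setmul op (fullset H) S)).
        set (R := U S (setmul op S (fullset H))).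
        assert (h : setmul op (setmul op L R) (fullset H) a).
        { apply (hP R (fullset H) L).
          - split; [exists a; left; reflexivity|].
            apply sub_Ur. unfold R. rewrite (distl op). apply sub_U.
            + apply mono; [apply sub_refl|apply sub_F].
            + rewrite (massoc op hsg). apply mono; [apply sub_refl|apply sub_F].
          - split; [destruct hH as [h0]; exists h0; exact I|apply sub_F].
          - split; [exists a; left; reflexivity|].
            apply sub_Ur. unfold L. repeat (rewrite (distl op) || rewrite (distr op)). repeat apply sub_U;
            repeat rewrite <- (massoc op hsg); (apply mono; [apply sub_F|apply sub_refl]).
          - split; [split; left; reflexivity|exact I]. }
        assert (hs : subset (setmul op (setmul op L R) (fullset H)) (U W V)).
        { unfold L, R, V, W. repeat (rewrite (distl op) || rewrite (distr op)). repeat apply sub_U;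
          repeat rewrite (massoc op hsg);
          first [ (apply sub_Ul; solve [repeat (first [apply sub_F | (apply mono; [apply sub_refl|])])])
                | (apply sub_Ur; solve [repeat (first [apply sub_F | (apply mono; [apply sub_refl|])])]) ]. }
        apply hs; exact h. }
      apply key. destruct hUWV as [hW|hV]; [|exact hV].
      assert (h1 : subset S (U W V)).
      { apply in_sub. left; exact hW. }
      assert (h2 : subset S (setmul op S (setmul op (U W V) (fullset H)))).
      { eapply sub_trans; [apply in_sub; exact hW|].
        unfold W at 1. apply mono; [apply sub_refl|]. apply mono; [exact h1|apply sub_refl]. }
      assert (h3 : subset (setmul op S (setmul op (U W V) (fullset H))) V).
      2: exact (h3 a (h2 a eq_refl)).
      rewrite (distl op), (distr op). apply sub_U.
      * unfold V, W. rewrite !(massoc op hsg). apply mono; [apply sub_F|].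
        repeat (first [apply sub_F | (apply mono; [apply sub_refl|])]).
      * unfold V at 1. rewrite (massoc op hsg).
        eapply sub_trans; [|apply (absF2 op hsg S)].
        apply mono; [apply sub_refl|]. apply mono; [apply sub_refl|].
        unfold W. rewrite !(massoc op hsg).
        repeat (first [apply sub_F | (apply mono; [apply sub_refl|])]).
Qed.
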